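(* Consider the clique inference problem with a max-like clique potential $C(\mathbf{v})=\max_{v\in V} f_v(n_v(\mathbf{v}))$, where each $f_v:\{0,1,\dots,n\}\to\mathbb{R}$ is non-decreasing. Then the $\alpha$-pass algorithm returns an assignment maximizing $F$ (a MAP assignment).
   Context: Clique inference problem: there are $n$ vertices $1,\dots,n$, a finite set $V$ of values, real vertex potentials $\psi_{jv}$ ($1\le j\le n$, $v\in V$), and a symmetric clique potential $C$, i.e. $C(v_1,\dots,v_n)$ depends only on the counts $n_v(\mathbf{v})=|\{j:v_j=v\}|$. The objective is to maximize $F(\mathbf{v})=\sum_{j=1}^n\psi_{jv_j}+C(\mathbf{v})$ over $\mathbf{v}\in V^n$. The $\alpha$-pass algorithm: for each $\alpha\in V$, sort the vertices in decreasing order of $\psi_{j\alpha}-\max_{v\neq\alpha}\psi_{jv}$; for each $k\in\{1,\dots,n\}$ form the assignment $\mathbf{v}^{\alpha,k}$ that gives the first $k$ sorted vertices the value $\alpha$ and every other vertex its best non-$\alpha$ value (a $v\ne\alpha$ maximizing $\psi_{jv}$); output the assignment $\mathbf{v}^{\alpha,k}$ with the largest value of $F$ over all $\alpha\in V$ and $1\le k\le n$. *)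

(* Defs.v *)
From mathcomp Require Import all_boot all_order all_algebra.
Set Implicit Arguments. Unset Strict Implicit. Unset Printing Implicit Defensive.
Import Order.TTheory GRing.Theory Num.Theory.
Local Open Scope ring_scope.

Section Clique.
Variables (R : realFieldType) (n : nat) (V : finType).

Definition cnt (w : 'I_n -> V) (v : V) : nat := #|[pred j | w j == v]|.

(* max-like clique potential C(w) = max_{v in V} f_v(n_v(w)).
   (The default value only matters for an empty V, where the max is vacuous.) *)
Definition Cmax (f : V -> nat -> R) (w : 'I_n -> V) : R :=
  match [pick v : V] with
  | Some v0 => \big[Num.max/f v0 (cnt w v0)]_(v : V) f v (cnt w v)
  | None => 0
  end.

Definition Fobj (psi : 'I_n -> V -> R) (f : V -> nat -> R) (w : 'I_n -> V) : R :=
  \sum_(j < n) psi j (w j) + Cmax f w.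

Definition best_non (psi : 'I_n -> V -> R) (b : 'I_n -> V -> V) : Prop :=
  forall j alpha, b j alpha != alpha /\
    (forall v, v != alpha -> psi j v <= psi j (b j alpha)).

Definition margin (psi : 'I_n -> V -> R) (b : 'I_n -> V -> V) (j : 'I_n) (alpha : V) : R :=
  psi j alpha - psi j (b j alpha).

Definition sorted_by_margin (psi : 'I_n -> V -> R) (b : 'I_n -> V -> V)
  (sigma : V -> 'I_n -> 'I_n) : Prop :=
  forall alpha, injective (sigma alpha) /\
    (forall p q : 'I_n, (p <= q)%N ->
       margin psi b (sigma alpha q) alpha <= margin psi b (sigma alpha p) alpha).

Definition cand (b : 'I_n -> V -> V) (sigma : V -> 'I_n -> 'I_n) (alpha : V) (k : nat)
  : 'I_n -> V :=
  fun j => if [exists p : 'I_n, (p < k)%N && (sigma alpha p == j)] then alpha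
           else b j alpha.

End Clique.

(* Main.v *)
Require Import Defs.
From mathcomp Require Import all_boot all_order all_algebra.
Import Order.TTheory GRing.Theory Num.Theory.
Local Open Scope ring_scope.

Section Aux.
Variables (R : realFieldType) (n : nat) (V : finType).

Lemma Cmax_ge (f : V -> nat -> R) (w : 'I_n -> V) v :
  f v (cnt w v) <= Cmax f w.
Proof.
rewrite /Cmax; case: pickP => [v0 _|/(_ v)//].
rewrite (bigD1 v) //= le_max lexx //.
Qed.

Lemma Cmax_ex (f : V -> nat -> R) (w : 'I_n -> V) (v1 : V) :
  exists a, Cmax f w = f a (cnt w a).
Proof.
rewrite /Cmax; case: pickP => [v0 _|/(_ v1)//].
elim/big_ind: _ => [|x y [a ->] [c ->]|a _]; [by exists v0| |by exists a].
by case: (leP (f a (cnt w a)) (f c (cnt w c))) => _; [exists c|exists a].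
Qed.

Lemma cnt_le (w : 'I_n -> V) v : (cnt w v <= n)%N.
Proof. by rewrite /cnt; apply: leq_trans (max_card _) _; rewrite card_ord. Qed.

Lemma card_lt_ord m : (m <= n)%N -> #|[set p : 'I_n | (p < m)%N]| = m.
Proof.
move=> hm.
have -> : [set p : 'I_n | (p < m)%N] = [set widen_ord hm i | i in [set: 'I_m]].
  apply/setP => p; rewrite inE; apply/idP/imsetP => [hp|[i _ ->]]; last exact: (ltn_ord i).
  by exists (Ordinal hp) => //; apply/val_inj.
have hi : injective (widen_ord hm) by move=> x y /(congr1 val) /= /val_inj.
rewrite (card_imset _ hi).
  by rewrite cardsT card_ord.
Qed.

Lemma cnt_cand (psi : 'I_n -> V -> R) (b : 'I_n -> V -> V) (hb : best_non psi b) sigma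
  (hs : forall a, injective (sigma a)) beta m : (m <= n)%N ->
  cnt (cand b sigma beta m) beta = m.
Proof.
move=> hm; rewrite /cnt -{2}(@card_lt_ord m hm) -(card_imset _ (hs beta)).
apply: eq_card => j; rewrite !inE /cand.
case: ifP => [/existsP[p /andP[hp /eqP <-]]|hne].
  by rewrite eqxx; apply/esym/imsetP; exists p; rewrite ?inE.
have [/negbTE -> _] := hb j beta; apply/esym/imsetP => -[p]; rewrite inE => hp hj.
by move/negbT/existsPn: hne => /(_ p); rewrite hp hj eqxx.
Qed.


Lemma sum_ind (x : 'I_n -> V) beta :
  \sum_j ((x j == beta)%:R : R) = (cnt x beta)%:R.
Proof.
rewrite /cnt -sum1_card natr_sum [RHS]big_mkcond /=; apply: eq_bigr => j _.
by rewrite inE /=; case: (x j == beta).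
Qed.

Lemma psi_le (psi : 'I_n -> V -> R) (b : 'I_n -> V -> V) (hb : best_non psi b)
  sigma (hsigma : sorted_by_margin psi b sigma) (w : 'I_n -> V) beta :
  \sum_j psi j (w j) <= \sum_j psi j (cand b sigma beta (cnt w beta) j).
Proof.
set m := cnt w beta.
have hmn : (m <= n)%N by exact: cnt_le.
have [hinj hsort] := hsigma beta.
have hcnt := @cnt_cand psi b hb sigma (fun a => proj1 (hsigma a)) beta m hmn.
have hm : m = cnt w beta by [].
clearbody m.
case: m hmn hcnt hm => [|m'] hmn hcnt hm.
  apply: ler_sum => j _; rewrite /cand.
  have -> : [exists p : 'I_n, (p < 0)%N && (sigma beta p == j)] = false.
    by apply/negbTE/existsPn => p.
  have [_ hbj] := hb j beta; apply: hbj.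
  apply/eqP => hwj; have : (0 < cnt w beta)%N.
    by apply/card_gt0P; exists j; rewrite inE /= hwj.
  by rewrite -hm.
have hq : (m' < n)%N by [].
set t := margin psi b (sigma beta (Ordinal hq)) beta.
have [g hg1 hg2] := injF_bij hinj.
have key : \sum_j (psi j (w j) - (w j == beta)%:R * t) <=
           \sum_j (psi j (cand b sigma beta m'.+1 j) - (cand b sigma beta m'.+1 j == beta)%:R * t).
  apply: ler_sum => j _; rewrite /cand.
  have [hbne hbj] := hb j beta.
  case: ifP => hT.
    rewrite eqxx mul1r.
    have ht : t <= margin psi b j beta.
      case/existsP: hT => p /andP [hp /eqP <-].
      by apply: hsort.
    rewrite /margin in ht.
    case: eqP => [->|/eqP hne]; first by rewrite mul1r.
    rewrite mul0r subr0; apply: le_trans (hbj _ hne) _; by rewrite lerBrDl -lerBrDr.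
  rewrite (negbTE hbne) mul0r subr0.
  case: eqP => [->|/eqP hne]; last by rewrite mul0r subr0; exact: hbj.
  rewrite mul1r lerBlDr -lerBlDl.
  have ht : margin psi b j beta <= t.
    rewrite -{1}(hg2 j); apply: hsort.
    rewrite leqNgt; apply/negP => hlt; move/negbT/negP: hT; apply.
    by apply/existsP; exists (g j); rewrite (leqW hlt) hg2 eqxx.
  by [].
move: key; rewrite !sumrB -!mulr_suml !sum_ind hcnt -hm.
by rewrite lerD2r.
Qed.

End Aux.
Theorem theorem1 (R : realFieldType) (n : nat) (V : finType)
  (psi : 'I_n -> V -> R) (f : V -> nat -> R)
  (f_mono : forall v (i j : nat), (i <= j <= n)%N -> f v i <= f v j)
  (b : 'I_n -> V -> V) (hb : best_non psi b)
  (sigma : V -> 'I_n -> 'I_n) (hsigma : sorted_by_margin psi b sigma)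
  (alpha0 : V) (k0 : nat) (hk0 : (1 <= k0 <= n)%N)
  (hout : forall (alpha : V) (k : nat), (1 <= k <= n)%N ->
     Fobj psi f (cand b sigma alpha k) <= Fobj psi f (cand b sigma alpha0 k0)) :
  forall w : 'I_n -> V, Fobj psi f w <= Fobj psi f (cand b sigma alpha0 k0).
Proof.
move=> w.
have hn : (0 < n)%N by case/andP: hk0 => h1 h2; exact: leq_trans h1 h2.
pose j0 := Ordinal hn.
have [a ha] := @Cmax_ex R n V f w (w j0).
pose beta := if (0 < cnt w a)%N then a else w j0.
have hbpos : (1 <= cnt w beta)%N.
  rewrite /beta; case: ifP => // _; apply/card_gt0P; exists j0; by rewrite inE /=.
have hb2 : (1 <= cnt w beta <= n)%N by rewrite hbpos cnt_le.
apply: le_trans (hout beta _ hb2).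
rewrite /Fobj lerD //; first exact: psi_le.
rewrite ha; apply: le_trans (@Cmax_ge R n V f _ a).
apply: f_mono; rewrite cnt_le andbT.
case: (posnP (cnt w a)) => [-> //|h].
have -> : beta = a by rewrite /beta h.
rewrite (@cnt_cand R n V psi b hb sigma (fun a => proj1 (hsigma a)) a _ (@cnt_le n V w a)).
by [].
Qed.
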